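(* Let $p$ be an odd prime, $k\ge1$, and write $\phi(p^k)=2^\theta\mu$ with $\mu$ odd. For every integer $r\ge1$, the graph $\mathcal{U}_{p^k}$ has a connected component isomorphic to $C_r(T_2^\theta)$ if and only if $\mu$ is divisible by some triggering divisor of $r$.
   Context: $\mathcal{G}_{n}$ is the directed graph on $\{0,\dots,n-1\}$ with an edge $x\to x^2\bmod n$ for each $x$, and $\mathcal{U}_n$ is its subgraph induced on the units mod $n$. $\phi$ is Euler's totient function. For odd $d\ge1$, $\mathrm{ord}_d(2)$ is the least positive integer $r$ with $d\mid 2^r-1$. A positive odd integer $d$ is a triggering divisor for $r$ if $\mathrm{ord}_d(2)=r$ and $\mathrm{ord}_e(2)\neq r$ for every proper positive divisor $e$ of $d$. The regular grounded tree $T_w^\ell$ has $w^\ell$ vertices in layers $0,\dots,\ell$. Layer $0$ is the root, which has a loop. Layer $1$ has $w-1$ vertices mapping to the root. Each vertex of layer $j$, $1\le j<\ell$, has exactly $w$ vertices of layer $j+1$ mapping to it. Layer $\ell$ consists of leaves. For a grounded tree $T$ and $\alpha\ge1$, the flower cycle $C_\alpha(T)$ is built as follows: take $\alpha$ disjoint copies of $T$, delete the root loops, and join the roots by edges root$_i\to$root$_{i+1 \bmod \alpha}$. *)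

(* Defs.v *)
From Stdlib Require Import Relations.Relation_Operators.
From mathcomp Require Import all_boot.
Set Implicit Arguments. Unset Strict Implicit. Unset Printing Implicit Defensive.

Record digraph := Digraph {
  carrier : Type;
  vert : carrier -> Prop;
  edge : carrier -> carrier -> Prop }.
Arguments vert : clear implicits.
Arguments edge : clear implicits.

Definition vtype (G : digraph) := {x : carrier G | vert G x}.

Definition induced (G : digraph) (P : carrier G -> Prop) : digraph :=
  Digraph (fun x => vert G x /\ P x) (@edge G).

Definition graph_iso (G H : digraph) : Prop :=
  exists g : vtype G -> vtype H, bijective g /\
    forall u v : vtype G, edge G (sval u) (sval v) <-> edge H (sval (g u)) (sval (g v)).

Definition wconn (G : digraph) : carrier G -> carrier G -> Prop :=
  clos_refl_sym_trans (carrier G) (fun a b => vert G a /\ vert G b /\ edge G a b).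

Definition component (G : digraph) (x : carrier G) : digraph :=
  @induced G (@wconn G x).
Arguments component : clear implicits.
Arguments wconn : clear implicits.
Arguments induced : clear implicits.

Definition has_component_iso (G H : digraph) : Prop :=
  exists x, vert G x /\ graph_iso (component G x) H.

Definition Gsq (n : nat) : digraph :=
  Digraph (fun x : nat => x < n) (fun x y => y = (x ^ 2) %% n).
Definition Usq (n : nat) : digraph := induced (Gsq n) (fun x => coprime x n).

(* Grounded tree: a digraph with a distinguished root carrying a loop. *)
Record grounded_tree := GTree { tgraph : digraph; troot : carrier tgraph }.
Arguments GTree : clear implicits.

(* Flower cycle C_alpha(T): alpha copies (indexed by i < alpha), root loops
   deleted, edges root_i -> root_{(i+1) mod alpha} added. *)
Definition flower (alpha : nat) (T : grounded_tree) : digraph :=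
  let G := tgraph T in let r := troot T in
  Digraph (fun it : nat * carrier G => it.1 < alpha /\ vert G it.2)
    (fun it jt =>
       (it.1 = jt.1 /\ edge G it.2 jt.2 /\ ~ (it.2 = r /\ jt.2 = r)) \/
       (it.2 = r /\ jt.2 = r /\ jt.1 = (it.1 + 1) %% alpha)).

(* Regular grounded tree T_w^l: a vertex of layer j is a sequence [a1;...;aj]
   with 1 <= a1 < w, 0 <= ai < w, j <= l; the root is [::]; the edge goes
   from [a1;...;aj] to [a1;...;a(j-1)] (root has a loop). *)
Definition regtree (w l : nat) : grounded_tree :=
  GTree (Digraph
    (fun s : seq nat => [&& size s <= l, all (fun a => a < w) s &
                            (s == [::]) || (head 0 s != 0)])
    (fun s t => t = take (size s).-1 s))
    [::].

Definition ord2_is (d r : nat) : Prop :=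
  0 < r /\ d %| 2 ^ r - 1 /\ forall s, 0 < s -> s < r -> ~ (d %| 2 ^ s - 1).

Definition triggering (d r : nat) : Prop :=
  0 < d /\ odd d /\ ord2_is d r /\
  forall e, 0 < e -> e %| d -> e != d -> ~ ord2_is e r.

(* Main.v *)
Require Import Defs.
From mathcomp Require Import all_boot all_fingroup all_algebra all_solvable.
From mathcomp Require Import zify.
From Stdlib Require Import Classical ProofIrrelevance ClassicalEpsilon Relations.Relation_Operators.
Set Implicit Arguments. Unset Strict Implicit. Unset Printing Implicit Defensive.
Import GRing.Theory.

Lemma ZpX Q (x : 'Z_Q) e : 1 < Q -> val (x ^+ e)%R = (val x ^ e) %% Q.
Proof. move=> HQ. rewrite -{1}(natr_Zp x) -natrX. exact: val_Zp_nat. Qed.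

Lemma ZpX' Q (x : 'Z_Q) e q : 1 < Q -> Q = q -> val (x ^+ e)%R = (val x ^ e) %% q.
Proof. by move=> HQ <-; apply: ZpX. Qed.

Lemma coprime_eqL Q x q : coprime Q x -> Q = q -> coprime x q.
Proof. by move=> H <-; rewrite coprime_sym. Qed.

Lemma primroot (p k : nat) : prime p -> odd p -> 0 < k ->
  exists g, coprime g (p^k) /\
   (forall e e', (g^e %% p^k = g^e' %% p^k) <-> (e = e' %[mod totient (p^k)])) /\
   (forall w, w < p^k -> coprime w (p^k) -> exists e, w = g^e %% p^k).
Proof.
move=> pp op k0.
set q := p ^ k.
have q1 : 1 < q by rewrite /q -{1}(exp1n k) ltn_exp2r // prime_gt1.
pose G := [set: 'Z_q]%G.
have oG : #|G| = q by rewrite cardsT card_ord Zp_cast.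
have pG : pgroup p G by rewrite /pgroup oG pnatX pnat_id.
have cG : cyclic G by rewrite /G /= Zp_cycle cycle_cyclic.
have ntG : G :!=: 1%g by rewrite -cardG_gt1 oG.
have := cyclic_pgroup_Aut_structure pG cG ntG.
move=> /= [m [[mX [m1 mM] [minj mim] mexp minv] [_ cF _ _] H]].
have cA : cyclic (Aut G).
  move: H; case: ifP => _; first by move=> ->.
  by case=> t [_ _ _]; rewrite op => -[[]].
have [a defA] := cyclicP cA.
have aA : a \in Aut G by rewrite defA cycle_id.
have oa : #[a]%g = totient q by rewrite orderE -defA card_Aut_cyclic // oG.
exists (val (m a)).
have ua : (m a \is a GRing.unit)%R by rewrite -mim; apply: map_f; rewrite mem_enum.
have oG' : #|[set: 'Z_q]| = q by [].
have Q1 : 1 < #|[set: 'Z_q]| by rewrite oG'.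
split.
  have H1 : coprime #|[set: 'Z_q]| (val (m a)) by rewrite -unitZpE // natr_Zp.
  exact: coprime_eqL H1 oG'.
split.
  move=> e e'; rewrite -!(ZpX' _ _ Q1 oG').
  split.
    move=> /val_inj; rewrite -!mexp // => /minj.
    rewrite !groupX // => /(_ isT isT) /eqP; rewrite eq_expg_mod_order oa; by move/eqP.
  move=> H1; congr val; rewrite -!mexp //; congr m; apply/eqP.
  by rewrite eq_expg_mod_order oa; apply/eqP.
move=> w wq cw.
have : ((w%:R : 'Z_#|[set: 'Z_q]|) \is a GRing.unit)%R by rewrite unitZpE // oG' coprime_sym.
rewrite -mim => /imageP [b bA Hb].
move: bA; rewrite defA => /cycleP [e he].
exists e.
rewrite -(ZpX' _ _ Q1 oG') -mexp ?defA ?cycle_id // -he -Hb.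
by rewrite Zp_nat /= Zp_cast // oG' modn_small.
Qed.

Definition bin (s : seq nat) : nat := foldr (fun a acc => a + 2 * acc) 0 s.
Definition tau th s := 2 ^ (th - size s) * bin s.
Definition tvert th (s : seq nat) :=
  [&& size s <= th, all (fun a => a < 2) s & (s == [::]) || (head 0 s != 0)].

Lemma bin_rcons t a : bin (rcons t a) = bin t + 2 ^ size t * a.
Proof. elim: t => [|b t IH] /=; first by rewrite expn0 mul1n addn0.
rewrite IH expnS; lia. Qed.

Lemma bin_lt s : all (fun a => a < 2) s -> bin s < 2 ^ size s.
Proof. elim: s => [|a s IH] //= /andP [Ha Hs]. have := IH Hs. rewrite expnS. lia. Qed.

Lemma tau_succ th s : tvert th s -> s != [::] ->
  tau th (take (size s).-1 s) = 2 * tau th s %[mod 2 ^ th].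
Proof.
case/lastP: s => [|t a] //= /and3P [Hs _ _] _.
have -> : take (size (rcons t a)).-1 (rcons t a) = t by rewrite size_rcons -cats1 take_size_cat.
rewrite /tau size_rcons bin_rcons.
rewrite size_rcons in Hs.
have -> : 2 * (2 ^ (th - (size t).+1) * (bin t + 2 ^ size t * a)) =
  2 ^ (th - size t) * bin t + 2 ^ th * a.
  have E1 : 2 ^ (th - size t) = 2 * 2 ^ (th - (size t).+1) by rewrite -expnS; congr (2 ^ _); lia.
  have E2 : 2 ^ th = 2 ^ (th - size t) * 2 ^ size t by rewrite -expnD; congr (2 ^ _); lia.
  rewrite E2 E1; lia.
by rewrite [in RHS]addnC [2 ^ th * a]mulnC modnMDl.
Qed.

Lemma tau_lt th s : tvert th s -> tau th s < 2 ^ th.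
Proof.
case/and3P => Hs Ha _. rewrite /tau.
have -> : 2 ^ th = 2 ^ (th - size s) * 2 ^ size s by rewrite -expnD subnK.
by rewrite ltn_pmul2l ?expn_gt0 // bin_lt.
Qed.

Lemma bin_inj s s' : size s = size s' -> all (fun a => a < 2) s ->
  all (fun a => a < 2) s' -> bin s = bin s' -> s = s'.
Proof.
elim: s s' => [|a s IH] [|a' s'] //= [Hsz] /andP [Ha Hs] /andP [Ha' Hs'] Hb.
have [-> Hb'] : a = a' /\ bin s = bin s' by lia.
by rewrite (IH s').
Qed.

Lemma bin_odd s : all (fun a => a < 2) s -> s != [::] -> head 0 s != 0 -> odd (bin s).
Proof. case: s => [|a s] //= /andP [Ha _] _ Hh. have -> : a = 1 by lia. by rewrite oddD oddM. Qed.

Lemma tau_root th : tau th [::] = 0.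
Proof. by rewrite /tau muln0. Qed.

Lemma logn_tau th s : tvert th s -> s != [::] -> logn 2 (tau th s) = th - size s.
Proof.
case/and3P => Hs Ha Hh Hne. rewrite (negbTE Hne) /= in Hh.
have ob := bin_odd Ha Hne Hh.
have b0 : 0 < bin s by case: (bin s) ob.
rewrite /tau lognM ?expn_gt0 // pfactorK // logn_coprime ?addn0 // coprime2n //.
Qed.

Lemma tau_inj th s s' : tvert th s -> tvert th s' -> tau th s = tau th s' -> s = s'.
Proof.
have pos : forall t, tvert th t -> t != [::] -> 0 < tau th t.
  move=> t /and3P [Ht Ha Hh] Hne; rewrite (negbTE Hne) /= in Hh.
  have ob := bin_odd Ha Hne Hh.
  by rewrite /tau muln_gt0 expn_gt0 /=; case: (bin t) ob.
move=> Hs Hs' E.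
case: (eqVneq s [::]) => Es; case: (eqVneq s' [::]) => Es'.
- by rewrite Es Es'.
- by have := pos _ Hs' Es'; rewrite -E Es tau_root.
- by have := pos _ Hs Es; rewrite E Es' tau_root.
have Hsz : size s = size s'.
  have := logn_tau Hs Es; rewrite E logn_tau //.
  case/and3P: Hs => ? _ _; case/and3P: Hs' => ? _ _; lia.
apply: bin_inj => //; first by case/and3P: Hs.
  by case/and3P: Hs'.
by move: E; rewrite /tau Hsz => /eqP; rewrite eqn_pmul2l ?expn_gt0 // => /eqP.
Qed.

Fixpoint dig j o := if j is j'.+1 then (o %% 2) :: dig j' (o %/ 2) else [::].

Lemma size_dig j o : size (dig j o) = j.
Proof. by elim: j o => //= j IH o; rewrite IH. Qed.

Lemma all_dig j o : all (fun a => a < 2) (dig j o).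
Proof. by elim: j o => //= j IH o; rewrite IH ltn_pmod. Qed.

Lemma bin_dig j o : bin (dig j o) = o %% 2 ^ j.
Proof.
elim: j o => [|j IH] o /=; first by rewrite modn1.
rewrite IH.
set X := o %/ 2. set b := o %% 2. set P := 2 ^ j.
have Ho : o = X * 2 + b by rewrite /X /b -divn_eq.
have HX : X = X %/ P * P + X %% P by rewrite -divn_eq.
set Y := X %/ P. set R := X %% P.
have RP : R < P by rewrite ltn_pmod // expn_gt0.
have b2 : b < 2 by rewrite ltn_pmod.
have -> : o = Y * 2 ^ j.+1 + (b + 2 * R) by rewrite expnS -/P Ho HX; nia.
by rewrite modnMDl modn_small // expnS -/P; lia.
Qed.

Lemma tau_surj th A : A < 2 ^ th -> exists s, tvert th s /\ tau th s = A.
Proof.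
case: (posnP A) => [-> _|A0 HA]; first by exists [::]; rewrite tau_root.
have [o co Ho] := pfactor_coprime (isT : prime 2) A0.
set v := logn 2 A in Ho.
have o0 : 0 < o by move: A0; rewrite Ho muln_gt0 => /andP [].
have vth : v < th.
  rewrite -(ltn_exp2l _ _ (isT : 1 < 2)); apply: leq_ltn_trans HA.
  by rewrite Ho leq_pmull.
have oj : o < 2 ^ (th - v).
  rewrite -(ltn_pmul2r (expn_gt0 2 v)) -expnD subnK ?(ltnW vth) //; by rewrite -Ho.
exists (dig (th - v) o); split.
  rewrite /tvert size_dig leq_subr all_dig /=.
  case E: (th - v) => [|j]; first by lia.
  by rewrite /= modn2; move: co; rewrite coprime2n => ->.
rewrite /tau size_dig bin_dig modn_small // Ho mulnC; congr (_ * 2 ^ _); lia.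
Qed.

Lemma mod_cancel m c x y : coprime m c -> c * x = c * y %[mod m] -> x = y %[mod m].
Proof.
wlog le : x y / x <= y.
  move=> W cm H; case/orP: (leq_total x y) => h; first exact: W.
  by apply/esym/W => //; apply/esym.
move=> cm /eqP; rewrite eq_sym eqn_mod_dvd ?leq_mul2l ?le ?orbT // -mulnBr Gauss_dvdr //.
by move=> H; apply/esym/eqP; rewrite eqn_mod_dvd.
Qed.

Lemma ord2_odd d r : ord2_is d r -> odd d.
Proof.
case=> r0 [H _]; apply: (dvdn_odd H).
by rewrite oddB ?expn_gt0 // oddX /=; case: r r0 {H}.
Qed.

Lemma pow2_mod d r a : ord2_is d r -> 2 ^ a = 2 ^ (a %% r) %[mod d].
Proof.
case=> r0 [H _].
have H1 : 2 ^ r = 1 %[mod d] by apply/eqP; rewrite eqn_mod_dvd ?expn_gt0.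
have -> : 2 ^ a = (2 ^ r) ^ (a %/ r) * 2 ^ (a %% r).
  by rewrite -expnM -expnD mulnC -divn_eq.
by rewrite -modnMml -modnXm H1 modnXm exp1n modnMml mul1n.
Qed.

Lemma pow2_modr d r a b : ord2_is d r -> a = b %[mod r] -> 2 ^ a = 2 ^ b %[mod d].
Proof. by move=> H E; rewrite (pow2_mod a H) (pow2_mod b H) E. Qed.

Lemma pow2_inj d r k k' : ord2_is d r -> k < r -> k' < r -> 2 ^ k = 2 ^ k' %[mod d] -> k = k'.
Proof.
move=> H; wlog le : k k' / k <= k'.
  move=> W kr k'r E; case/orP: (leq_total k k') => h; first exact: W.
  by apply/esym/W => //; apply/esym.
move=> kr k'r.
have od := ord2_odd H.
rewrite -(subnK le) expnD mulnC => E.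
have : 2 ^ (k' - k) = 1 %[mod d].
  apply: (@mod_cancel d (2 ^ k)); first by rewrite coprime_sym; apply: coprimeXl; rewrite coprime2n.
  by rewrite muln1 -E.
move/eqP; rewrite eqn_mod_dvd ?expn_gt0 // => Hd.
case: H => r0 [_ Hmin].
case: (posnP (k' - k)) => h; first lia.
by case: (Hmin _ h _ Hd); lia.
Qed.


Lemma trig_exists d r : 0 < d -> ord2_is d r -> exists d', triggering d' r /\ d' %| d.
Proof.
elim/ltn_ind: d => d IH d0 Hd.
case: (classic (exists e, [/\ 0 < e, e %| d, e != d & ord2_is e r])).
  case=> e [e0 ed ne He].
  have lt : e < d by rewrite ltn_neqAle ne dvdn_leq.
  have [d' [Ht Hd']] := IH e lt e0 He.
  by exists d'; split => //; apply: dvdn_trans Hd' ed.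
move=> N; exists d; split => //; split => //; split; first exact: ord2_odd Hd.
split => // e e0 ed ne He; apply: N; by exists e.
Qed.


Lemma sig_eq (A : Type) (P : A -> Prop) (x y : {a | P a}) : sval x = sval y -> x = y.
Proof. apply: eq_sig_hprop => a p q; exact: proof_irrelevance. Qed.

Lemma graph_iso_sym G H : graph_iso G H -> graph_iso H G.
Proof.
case=> g [[g' gK g'K] He]; exists g'; split; first by exists g.
move=> u v; rewrite (He (g' u) (g' v)) !g'K; done.
Qed.

Lemma injsurj_bij (A B : Type) (f : A -> B) :
  injective f -> (forall y, exists x, f x = y) -> bijective f.
Proof.
move=> fi fs.
pose f' := fun y => sval (constructive_indefinite_description _ (fs y)).
have f'K : cancel f' f by move=> y; rewrite /f'; case: constructive_indefinite_description.
exists f' => // x; apply: fi; by rewrite f'K.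
Qed.

Definition fsucc r (v : nat * seq nat) : nat * seq nat :=
  if v.2 == [::] then ((v.1 + 1) %% r, [::]) else (v.1, take (size v.2).-1 v.2).

Lemma fedge_iff r th v w :
  edge (flower r (regtree 2 th)) v w <-> w = fsucc r v.
Proof.
case: v w => i s [j t] /=; rewrite /fsucc /=.
case: (eqVneq s [::]) => [->|ne] /=.
  split; first by case=> [[_ [-> H]]|[_ [-> ->]]] //; exfalso; exact: H.
  by case=> -> ->; right.
split; first by case=> [[-> [-> _]]|[E _]] //; rewrite E in ne.
case=> -> ->; left; split => //; split => // [[E _]]; by rewrite E in ne.
Qed.

Lemma iter_fsucc r m : 0 < r -> iter m (fsucc r) (0, [::]) = (m %% r, [::]).
Proof.
move=> r0; elim: m => [|m IH] /=; first by rewrite mod0n.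
by rewrite IH /fsucc /= modnDml addn1.
Qed.

Lemma succ_vert n x y : 0 < n -> vert (component (Usq n) x) y ->
  vert (component (Usq n) x) (y ^ 2 %% n).
Proof.
move=> n0 [[yn cy] Hc]; have vy2 : vert (Usq n) (y ^ 2 %% n).
  split; first by rewrite /= ltn_pmod.
  by rewrite /= coprime_modl coprimeXl.
split => //; apply: rst_trans Hc _; apply: rst_step; split; first by split.
by split.
Qed.

Lemma dvd_gcd_char N e t : 0 < N ->
  (N %| e * t) = (N %/ gcdn N e %| t).
Proof.
move=> N0; set G := gcdn N e.
have G0 : 0 < G by rewrite gcdn_gt0 N0.
have HN : N = N %/ G * G by rewrite divnK // dvdn_gcdl.
have He : e = e %/ G * G by rewrite divnK // dvdn_gcdr.
have cop : coprime (N %/ G) (e %/ G).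
  rewrite /coprime; apply/eqP.
  have : G = gcdn (N %/ G) (e %/ G) * G by rewrite muln_gcdl -HN -He.
  move/eqP; rewrite -{1}(mul1n G) eqn_pmul2r // => /eqP; done.
rewrite {1}HN {1}He mulnAC dvdn_pmul2r // Gauss_dvdr //.
Qed.

Lemma backward n N g th mu r :
  1 < n -> (forall e e', g ^ e %% n = g ^ e' %% n <-> e = e' %[mod N]) ->
  (forall w, w < n -> coprime w n -> exists e, w = g ^ e %% n) ->
  N = 2 ^ th * mu -> odd mu -> 0 < r ->
  has_component_iso (Usq n) (flower r (regtree 2 th)) ->
  exists d, triggering d r /\ d %| mu.
Proof.
move=> n1 Hg Hs HN omu r0 [x [vx [h [[h' h'K hK] hedge]]]].
have vF0 : vert (flower r (regtree 2 th)) (0, [::]) by split.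
pose F0 : vtype (flower r (regtree 2 th)) := exist _ (0, [::]) vF0.
pose u := h' F0.
have n0 : 0 < n by apply: ltnW.
pose Sc : vtype (component (Usq n) x) -> vtype (component (Usq n) x) :=
  fun y => exist _ (sval y ^ 2 %% n) (succ_vert n0 (svalP y)).
have hS : forall y, sval (h (Sc y)) = fsucc r (sval (h y)).
  by move=> y; apply/fedge_iff; apply/(hedge y (Sc y)).
have hit : forall m, sval (h (iter m Sc u)) = (m %% r, [::]).
  elim => [|m IH]; first by rewrite /= /u hK /= mod0n.
  by rewrite /= hS IH /fsucc /= modnDml addn1.
set w := sval u.
have [[wn cw] _] := svalP u.
have hw : forall m, sval (iter m Sc u) = w ^ (2 ^ m) %% n.
  elim=> [|m IH]; first by rewrite /= expn1 modn_small.
  by rewrite /= IH modnXm -expnM -expnSr.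
have key : forall m, (w ^ (2 ^ m) %% n = w) <-> (r %| m).
  move=> m; rewrite /dvdn; split.
  - move=> E. have E' : iter m Sc u = u by apply: sig_eq; rewrite hw E.
    by have := hit m; rewrite E' /u hK /= => -[<-].
  - move/eqP=> E. have : h (iter m Sc u) = h u by apply: sig_eq; rewrite hit /u hK E.
    by move/(congr1 h'); rewrite !h'K => E'; rewrite -hw E'.
have [e he] := Hs w wn cw.
have N0 : 0 < N by rewrite HN muln_gt0 expn_gt0 /= odd_gt0.
set D := N %/ gcdn N e.
have keyN : forall m, (w ^ (2 ^ m) %% n = w) <-> (N %| e * (2 ^ m - 1)).
  move=> m; rewrite he modnXm -expnM Hg mulnBr muln1.
  rewrite -eqn_mod_dvd ?leq_pmulr ?expn_gt0 //.
  by split => [/eqP|/eqP].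
have keyD : forall m, (D %| 2 ^ m - 1) <-> (r %| m).
  move=> m; rewrite /D -dvd_gcd_char //; split.
  - by move/keyN/key.
  - by move/key/keyN.
have oD : ord2_is D r.
  split=> //; split; first by apply/keyD.
  move=> s s0 sr /keyD H; have := dvdn_leq s0 H; lia.
have D0 : 0 < D.
  case: oD => _ [H _]; apply: dvdn_gt0 H.
  have : 1 < 2 ^ r by rewrite -{1}(expn0 2) ltn_exp2l.
  lia.
have Dmu : D %| mu.
  have DN : D %| N by apply/dvdnP; exists (gcdn N e); rewrite mulnC divnK // dvdn_gcdl.
  move: DN; rewrite HN Gauss_dvdr // coprime_sym; apply: coprimeXl.
  rewrite coprime2n; exact: ord2_odd oD.
have [d' [Ht Hd']] := trig_exists D0 oD.
exists d'; split => //; exact: dvdn_trans Hd' Dmu.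
Qed.

Lemma lin_mod m x y a b : a = 0 %[mod m] -> b = 1 %[mod m] -> x * b + y * a = x %[mod m].
Proof.
move=> Ha Hb; rewrite -modnDm -(modnMmr x) -(modnMmr y) Ha Hb !modnMmr muln1 muln0.
by rewrite mod0n addn0 modn_mod.
Qed.

Lemma cmul_mod c d a b : 0 < c -> (c * a = c * b %[mod c * d]) <-> (a = b %[mod d]).
Proof.
move=> c0; rewrite -!muln_modr; split; first by move/eqP; rewrite eqn_pmul2l // => /eqP.
by move=> ->.
Qed.

Lemma tvert_take th s : tvert th s -> tvert th (take (size s).-1 s).
Proof.
case/and3P => Hs Ha Hh; apply/and3P; split.
- by rewrite size_take; case: ifP => _; lia.
- by move: Ha; rewrite -{1}(cat_take_drop (size s).-1 s) all_cat => /andP [].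
clear Hs Ha; move: Hh; case: s => [|a [|b t]] //=.
Qed.

Lemma vert_flower r th v : vert (flower r (regtree 2 th)) v <-> v.1 < r /\ tvert th v.2.
Proof. by []. Qed.

Lemma fsucc_vert r th v : 0 < r -> vert (flower r (regtree 2 th)) v ->
  vert (flower r (regtree 2 th)) (fsucc r v).
Proof.
move=> r0; case: v => i s [ir ts]; rewrite /fsucc /=.
case: (eqVneq s [::]) => [E|ne] /=; first by split; [rewrite ltn_pmod|].
by split => //; apply: tvert_take.
Qed.

Definition kk r (v : nat * seq nat) := (v.1 + (r - 1) * size v.2) %% r.

Lemma forward n N g th mu r d :
  1 < n -> coprime g n ->
  (forall e e', g ^ e %% n = g ^ e' %% n <-> e = e' %[mod N]) ->
  (forall w, w < n -> coprime w n -> exists e, w = g ^ e %% n) ->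
  N = 2 ^ th * mu -> odd mu -> 0 < r -> triggering d r -> d %| mu ->
  has_component_iso (Usq n) (flower r (regtree 2 th)).
Proof.
move=> n1 cg Hg Hs HN omu r0 [d0 [od [oD _]]] dmu.
have n0 : 0 < n by apply: ltnW.
have mu0 : 0 < mu := odd_gt0 omu.
set c := mu %/ d.
have Hmu : mu = c * d by rewrite /c divnK.
have c0 : 0 < c by move: mu0; rewrite Hmu muln_gt0 => /andP [].
have cop : coprime (2 ^ th) mu by apply: coprimeXl; rewrite coprime2n.
set u1 := chinese (2 ^ th) mu 0 1.
set u2 := chinese (2 ^ th) mu 1 0.
pose eps v := tau th v.2 * u2 + c * 2 ^ (kk r v) * u1.
have Leps : forall e v, (e = eps v %[mod N]) <->
    (e = tau th v.2 %[mod 2 ^ th] /\ e = c * 2 ^ (kk r v) %[mod mu]).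
  move=> e v; rewrite HN; split.
    move/eqP; rewrite chinese_remainder // => /andP [/eqP H1 /eqP H2]; split.
      by rewrite H1 /eps lin_mod // /u1 /u2 ?chinese_modl ?chinese_modr.
    by rewrite H2 /eps addnC lin_mod // /u1 /u2 ?chinese_modl ?chinese_modr.
  case=> H1 H2; apply/eqP; rewrite chinese_remainder //; apply/andP; split; apply/eqP.
    by rewrite H1 /eps lin_mod // /u1 /u2 ?chinese_modl ?chinese_modr.
  by rewrite H2 /eps addnC lin_mod // /u1 /u2 ?chinese_modl ?chinese_modr.
have P3 : forall a b, (c * 2 ^ a = c * 2 ^ b %[mod mu]) <-> (2 ^ a = 2 ^ b %[mod d]).
  by move=> a b; rewrite Hmu; apply: cmul_mod.
have epsm : forall v, eps v = tau th v.2 %[mod 2 ^ th] /\ eps v = c * 2 ^ (kk r v) %[mod mu].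
  by move=> v; apply/Leps.
have kklt : forall v, kk r v < r by move=> v; rewrite /kk ltn_pmod.
have inj : forall v w, vert (flower r (regtree 2 th)) v -> vert (flower r (regtree 2 th)) w ->
    eps v = eps w %[mod N] -> v = w.
  case=> i s [j t] [/= ir ts] [/= jr tt] /Leps [/= H1 H2].
  have [E1 E2] := epsm (i, s).
  have Est : s = t.
    apply: (tau_inj ts tt); rewrite -(modn_small (tau_lt ts)) -(modn_small (tau_lt tt)).
    by rewrite -E1 H1.
  subst t.
  have Ek : kk r (i, s) = kk r (j, s).
    apply: (pow2_inj oD (kklt _) (kklt _)); apply/P3; by rewrite -E2 H2.
  move: Ek; rewrite /kk /= => /eqP; rewrite eqn_modDr !modn_small // => /eqP ->; done.
have succ : forall v, vert (flower r (regtree 2 th)) v ->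
    eps (fsucc r v) = 2 * eps v %[mod N].
  case=> i s [/= ir ts]; apply/esym/Leps.
  have [E1 E2] := epsm (i, s).
  have kS : kk r (i, s) + 1 = kk r (fsucc r (i, s)) %[mod r].
    rewrite /kk /fsucc /=; case: (eqVneq s [::]) => [->|ne] /=.
      by rewrite muln0 !addn0 modnDml !modn_mod.
    rewrite modnDml size_take; clear E1 E2; case: s ts ne => [|a t] //= ts _.
    rewrite ltnSn /=; set R := r - 1.
    have -> : i + R * (size t).+1 + 1 = (i + R * size t) + r by rewrite /R mulnS; lia.
    by rewrite modnDr modn_mod.
  split.
    rewrite -modnMmr E1 modnMmr /fsucc /=.
    case: (eqVneq s [::]) => [E|ne] /=; first by rewrite E tau_root.
    by rewrite (tau_succ ts ne).
  rewrite -modnMmr E2 modnMmr mulnCA -expnS; apply/P3.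
  by apply: (pow2_modr oD); rewrite -addn1 kS modn_mod.
pose E e := g ^ e %% n.
have Esq : forall e, E e ^ 2 %% n = E (2 * e) by move=> e; rewrite /E modnXm -expnM mulnC.
have Eu : forall e, vert (Usq n) (E e).
  by move=> e; split; [rewrite /= ltn_pmod | rewrite /= coprime_modl coprimeXl].
have desc : forall a m, wconn (Usq n) (E a) (E (a * 2 ^ m)).
  move=> a; elim=> [|m IH]; first by rewrite expn0 muln1; apply: rst_refl.
  apply: rst_trans IH _; apply: rst_step; split; first exact: Eu.
  split; first exact: Eu.
  by rewrite /= Esq expnS mulnCA.
have kk0 : kk r (0, [::]) = 0 by rewrite /kk /= muln0 mod0n.
set x0 := E (eps (0, [::])).
have memb : forall v, vert (flower r (regtree 2 th)) v ->
    vert (component (Usq n) x0) (E (eps v)).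
  move=> v vv; split; first exact: Eu.
  have [E1 E2] := epsm v. have [F1 F2] := epsm (0, [::]).
  have Heq : E (eps (0, [::]) * 2 ^ (th + kk r v)) = E (eps v * 2 ^ th).
    apply/Hg; rewrite HN; apply/eqP; rewrite chinese_remainder //; apply/andP; split; apply/eqP.
      have -> : eps (0, [::]) * 2 ^ (th + kk r v) = (eps (0, [::]) * 2 ^ (kk r v)) * 2 ^ th.
        by rewrite expnD mulnA mulnAC.
      by rewrite !modnMl.
    rewrite -modnMml F2 modnMml -[in RHS]modnMml E2 modnMml kk0 expn0 muln1 expnD.
    congr (_ %% _); rewrite mulnA mulnAC; done.
  apply: rst_trans (desc _ (th + kk r v)) _; rewrite Heq; apply: rst_sym; exact: desc.
pose Q e := exists i, e = c * 2 ^ i %[mod mu].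
pose R y := exists e, y = E e /\ Q e.
have modmu : forall a b, a = b %[mod N] -> a = b %[mod mu].
  move=> a b; rewrite HN => /eqP; rewrite chinese_remainder // => /andP [_ /eqP]; done.
have Rw : forall a b, wconn (Usq n) a b -> (R a <-> R b).
  move=> a b; elim=> {a b}.
  - move=> a b [[an ca] [_ Hab]]; rewrite /= in Hab; split.
      case=> e [Ha [i Hi]]; exists (2 * e); split; first by rewrite Hab Ha Esq.
      by exists i.+1; rewrite expnS mulnCA -modnMmr Hi modnMmr.
    case=> e [Hb [i Hi]]; have [e' He'] := Hs a an ca; exists e'; split => //.
    have H : 2 * e' = e %[mod N] by apply/Hg; change (E (2 * e') = E e); rewrite -Esq /E -He' -Hab Hb.
    exists (i + r).-1; apply: (@mod_cancel mu 2); first by rewrite coprimen2.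
    rewrite (modmu _ _ H) Hi mulnCA -expnS prednK ?addn_gt0 ?r0 ?orbT //.
    apply/P3; apply: (pow2_modr oD); by rewrite modnDr.
  - by move=> a.
  - by move=> a b _ [H1 H2]; split.
  - move=> a b c' _ [H1 H2] _ [H3 H4]; split; by auto.
have R0 : R x0.
  exists (eps (0, [::])); split => //; exists 0; have [_ F2] := epsm (0, [::]); by rewrite kk0 in F2.
have surj : forall y, vert (component (Usq n) x0) y ->
    exists v, vert (flower r (regtree 2 th)) v /\ E (eps v) = y.
  move=> y [[yn cy] Hc]; have [e [-> [i Hi]]] := (Rw _ _ Hc).1 R0.
  have [s [ts Hts]] := tau_surj (ltn_pmod e (expn_gt0 2 th)).
  set k := i %% r.
  have Hk : kk r ((k + size s) %% r, s) = k.
    rewrite /kk /= modnDml -addnA.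
    have -> : size s + (r - 1) * size s = size s * r.
      by rewrite -{1}(mul1n (size s)) -mulnDl subnKC // mulnC.
    by rewrite addnC modnMDl modn_small // /k ltn_pmod.
  exists ((k + size s) %% r, s); split; first by split; [rewrite /= ltn_pmod|].
  apply/esym/Hg/Leps; split; first by rewrite /= Hts modn_mod.
  rewrite Hi; apply/P3; rewrite Hk /k; exact: (pow2_mod _ oD).
pose Phi : vtype (flower r (regtree 2 th)) -> vtype (component (Usq n) x0) :=
  fun v => exist _ (E (eps (sval v))) (memb _ (svalP v)).
have Phii : injective Phi.
  move=> v w /(congr1 sval) /= H; apply: sig_eq; apply: inj; [exact: svalP|exact: svalP|].
  by apply/Hg.
have Phis : forall y, exists v, Phi v = y.
  move=> y; have [v [vv Hv]] := surj _ (svalP y); exists (exist _ v vv); by apply: sig_eq.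
exists x0; split; first exact: Eu.
apply: graph_iso_sym; exists Phi; split; first exact: injsurj_bij.
move=> u v; rewrite fedge_iff.
change (sval v = fsucc r (sval u) <-> E (eps (sval v)) = E (eps (sval u)) ^ 2 %% n).
rewrite Esq; split.
  by move=> ->; apply/Hg; apply: succ (svalP u).
move/Hg => H; apply: inj; [exact: svalP | exact: fsucc_vert r0 (svalP u) | ].
by rewrite H; apply/esym/succ/svalP.
Qed.

Theorem corollary14 (p k theta mu r : nat) :
  prime p -> odd p -> 1 <= k ->
  totient (p ^ k) = 2 ^ theta * mu -> odd mu ->
  1 <= r ->
  (has_component_iso (Usq (p ^ k)) (flower r (regtree 2 theta)) <->
   exists d, triggering d r /\ d %| mu).
Proof.
move=> pp op k1 HN omu r1.
have [g [cg [Hg Hs]]] := primroot pp op k1.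
have n1 : 1 < p ^ k by rewrite -{1}(exp1n k) ltn_exp2r // prime_gt1.
split.
  exact: backward n1 Hg Hs HN omu r1.
by case=> d [Ht Hd]; exact: forward n1 cg Hg Hs HN omu r1 Ht Hd.
Qed.
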